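(* Let $\mathbf H_\Lambda(0)$ and $\mathbf H_\Lambda(1)$ be quadratic and strictly positive Hamiltonians on $\mathcal F(\mathbb C^L)$, with associated real skew-symmetric matrices $A_\Lambda(0)$, $A_\Lambda(1)$. Then $j(\mathbf H_\Lambda(0))=j(\mathbf H_\Lambda(1))$ if and only if $\mathrm{Sf}_2(A_\Lambda(0),A_\Lambda(1))=1$.
   Context: $\mathcal F(\mathbb C^L)$ is the fermionic Fock space over $\Lambda=\{1,\dots,L\}$ with creation/annihilation operators ${\mathfrak a}_j^*,{\mathfrak a}_j$ satisfying the CAR. Fix $\theta\in\mathbb R$ and define Majorana operators ${\mathfrak b}_{2j-1}=e^{i\theta/2}{\mathfrak a}_j+e^{-i\theta/2}{\mathfrak a}_j^*$, ${\mathfrak b}_{2j}=-ie^{i\theta/2}{\mathfrak a}_j+ie^{-i\theta/2}{\mathfrak a}_j^*$, and the column vector ${\mathfrak b}=({\mathfrak b}_1,{\mathfrak b}_3,\dots,{\mathfrak b}_{2L-1},{\mathfrak b}_2,{\mathfrak b}_4,\dots,{\mathfrak b}_{2L})^t$. A quadratic Hamiltonian $\mathbf H_\Lambda=\sum_{j,k}h_{jk}{\mathfrak a}_j^*{\mathfrak a}_k+\tilde h_{jk}{\mathfrak a}_j{\mathfrak a}_k+\text{adjoint}$ can be written (up to an additive constant) as $\mathbf H_\Lambda=\frac i2{\mathfrak b}^tA_\Lambda{\mathfrak b}$ with a unique real skew-symmetric $2L\times2L$ matrix $A_\Lambda$. It is strictly positive if $A_\Lambda$ is invertible (equivalently, all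 single-particle energies $E_j$ in the normal form $VA_\Lambda V^*=\begin{pmatrix}0&E\\-E&0\end{pmatrix}$, $V$ orthogonal, $E=\mathrm{diag}(E_1,\dots,E_L)\ge0$, are strictly positive). Kitaev index: $j(\mathbf H_\Lambda)=\mathrm{sgn}\,\mathrm{Pf}(A_\Lambda)$. Finite-dimensional $\mathbb Z_2$-valued spectral flow: for invertible real skew-symmetric matrices $T_0,T_1$, choose an invertible real $M$ with $T_1=MT_0M^*$ and set $\mathrm{Sf}_2(T_0,T_1)=\mathrm{sgn}\det(M)$. *)

(* Defs.v *)
From HB Require Import structures.
From mathcomp Require Import all_boot all_order all_algebra .
From mathcomp Require Import fingroup perm.
From mathcomp Require Import reals.
From Stdlib Require Import ClassicalEpsilon.
Set Implicit Arguments. Unset Strict Implicit. Unset Printing Implicit Defensive.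
Import Order.TTheory GRing.Theory Num.Theory.
Local Open Scope ring_scope.

Definition ord_succ (m : nat) (i : 'I_m) : 'I_m := insubd i i.+1.

(* Pfaffian of an (m x m) matrix, m = 2n, indices paired as (0,1),(2,3),...:
   Pf A = 1/(2^n n!) * sum_{s in S_2n} sgn(s) prod_{i<n} A_{s(2i), s(2i+1)} *)
Definition pfaffian (R : comUnitRingType) (m : nat) (A : 'M[R]_m) : R :=
  (\sum_(s : 'S_m) (-1) ^+ s *
     \prod_(i < m | ~~ odd i) A (s i) (s (ord_succ i)))
  / ((2 ^ (m./2))%N%:R * ((m./2)`!)%:R).

Definition skew_sym (R : realType) (m : nat) (A : 'M[R]_m) : Prop := A^T = - A.

(* strict positivity of the quadratic Hamiltonian H = (i/2) b^t A b *)
Definition strictly_positive (R : realType) (m : nat) (A : 'M[R]_m) : Prop :=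
  A \in unitmx.

Definition kitaev_index (R : realType) (m : nat) (A : 'M[R]_m) : R :=
  Num.sg (pfaffian A).

Definition Sf2 (R : realType) (m : nat) (T0 T1 : 'M[R]_m) : R :=
  Num.sg (\det (epsilon (inhabits (0 : 'M[R]_m))
     (fun M => M \in unitmx /\ T1 = M *m T0 *m M^T))).

(* Main.v *)
Require Import Defs.
From HB Require Import structures.
From mathcomp Require Import all_boot all_order all_algebra.
From mathcomp Require Import fingroup perm.
From mathcomp Require Import reals.
From mathcomp Require Import zify ring lra.
From Stdlib Require Import ClassicalEpsilon.
Set Implicit Arguments. Unset Strict Implicit. Unset Printing Implicit Defensive.
Import Order.TTheory GRing.Theory Num.Theory.
Local Open Scope ring_scope.


Section Idx.
Variable L : nat.
Local Notation m := (2 * L)%N.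

Lemma ev_lt (k : 'I_L) : (2 * k < m)%N.
Proof. have := ltn_ord k; lia. Qed.
Lemma od_lt (k : 'I_L) : ((2 * k).+1 < m)%N.
Proof. have := ltn_ord k; lia. Qed.
Lemma half_lt (i : 'I_m) : (i./2 < L)%N.
Proof. have := ltn_ord i; rewrite -{1}(odd_double_half i); case: (odd i) => /=; lia. Qed.

Definition ev (k : 'I_L) : 'I_m := Ordinal (ev_lt k).
Definition od (k : 'I_L) : 'I_m := Ordinal (od_lt k).
Definition hf (i : 'I_m) : 'I_L := Ordinal (half_lt i).

Lemma hf_ev k : hf (ev k) = k.
Proof. apply: val_inj => /=. lia. Qed.
Lemma hf_od k : hf (od k) = k.
Proof. apply: val_inj => /=. lia. Qed.
Lemma odd_ev k : odd (ev k) = false.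
Proof. by rewrite /= oddM. Qed.
Lemma odd_od k : odd (od k) = true.
Proof. by rewrite /= oddM. Qed.
Lemma ev_hf (i : 'I_m) : ~~ odd i -> ev (hf i) = i.
Proof. move=> h; apply: val_inj => /=; rewrite -{2}(odd_double_half i) (negPf h); lia. Qed.
Lemma od_hf (i : 'I_m) : odd i -> od (hf i) = i.
Proof. move=> h; apply: val_inj => /=; rewrite -{2}(odd_double_half i) h; lia. Qed.
Lemma ev_inj : injective ev.
Proof. by move=> a b /(congr1 hf); rewrite !hf_ev. Qed.
Lemma od_inj : injective od.
Proof. by move=> a b /(congr1 hf); rewrite !hf_od. Qed.
Lemma ev_neq_od a b : ev a != od b.
Proof. by apply/eqP => /(congr1 (fun i : 'I_m => odd i)); rewrite odd_ev odd_od. Qed.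

Lemma prod_even (R : comRingType) (F : 'I_m -> R) :
  \prod_(i < m | ~~ odd i) F i = \prod_(k < L) F (ev k).
Proof.
rewrite (reindex_onto ev hf); last by move=> i; apply: ev_hf.
by apply: eq_bigl => k; rewrite odd_ev hf_ev eqxx.
Qed.
Lemma prod_odd (R : comRingType) (F : 'I_m -> R) :
  \prod_(i < m | odd i) F i = \prod_(k < L) F (od k).
Proof.
rewrite (reindex_onto od hf); last by move=> i; apply: od_hf.
by apply: eq_bigl => k; rewrite odd_od hf_od eqxx.
Qed.
Lemma prod_all (R : comRingType) (F : 'I_m -> R) :
  \prod_(i < m) F i = \prod_(k < L) (F (ev k) * F (od k)).
Proof.
by rewrite (bigID (fun i : 'I_m => odd i)) /= mulrC prod_even prod_odd big_split.
Qed.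

Lemma ord_succ_ev k : ord_succ (ev k) = od k.
Proof. by apply: val_inj; rewrite /ord_succ val_insubd /= od_lt. Qed.

End Idx.


Section Mult.
Variable R : comRingType.
Variable L : nat.
Local Notation m := (2 * L)%N.

Definition Qf (A : 'M[R]_m) : R :=
  \sum_(s : 'S_m) (-1) ^+ s * \prod_(k < L) A (s (ev k)) (s (od k)).

Lemma expand2 (G : 'I_L -> 'I_m -> 'I_m -> R) :
  \prod_(k < L) \sum_(a < m) \sum_(b < m) G k a b =
  \sum_(g : {ffun 'I_m -> 'I_m}) \prod_(k < L) G k (g (ev k)) (g (od k)).
Proof.
under eq_bigr => k _ do rewrite pair_bigA /=.
rewrite bigA_distr_bigA /=.
pose h (g : {ffun 'I_m -> 'I_m}) : {ffun 'I_L -> 'I_m * 'I_m} :=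
  [ffun k => (g (ev k), g (od k))].
pose h' (f : {ffun 'I_L -> 'I_m * 'I_m}) : {ffun 'I_m -> 'I_m} :=
  [ffun i : 'I_m => if odd i then (f (hf i)).2 else (f (hf i)).1].
rewrite (reindex h) /=; last first.
  apply: onW_bij; exists h'.
  - move=> g; apply/ffunP => i; rewrite !ffunE.
    by case: ifP => oi; rewrite /= ?od_hf ?ev_hf ?oi // negbT.
  - move=> f; apply/ffunP => k; rewrite !ffunE odd_ev odd_od hf_ev hf_od.
    by case: (f k).
by apply: eq_bigr => g _; apply: eq_bigr => k _; rewrite ffunE.
Qed.

End Mult.

Section Mult2.
Variable R : comRingType.
Variable L : nat.
Local Notation m := (2 * L)%N.

Lemma det_colp (M : 'M[R]_m) (s : 'S_m) :
  \det (\matrix_(i, j) M j (s i)) = (-1) ^+ s * \det M.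
Proof.
have -> : \matrix_(i, j) M j (s i) = (col_perm s M)^T.
  by apply/matrixP => i j; rewrite !mxE.
by rewrite det_tr col_permE det_mulmx det_perm odd_permV mulrC.
Qed.

Lemma Qf_congr (M A : 'M[R]_m) : Qf (M *m A *m M^T) = \det M * Qf A.
Proof.
rewrite /Qf.
transitivity (\sum_(s : 'S_m) \sum_(g : {ffun 'I_m -> 'I_m})
   (-1) ^+ s * ((\prod_(i < m) M (s i) (g i)) *
        \prod_(k < L) A (g (ev k)) (g (od k)))).
  apply: eq_bigr => s _; rewrite -big_distrr /=; congr (_ * _).
  transitivity (\sum_(g : {ffun 'I_m -> 'I_m}) \prod_(k < L)
     (M (s (ev k)) (g (ev k)) * A (g (ev k)) (g (od k)) * M (s (od k)) (g (od k)))).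
    rewrite -(expand2 (fun k a b => M (s (ev k)) a * A a b * M (s (od k)) b)).
    apply: eq_bigr => k _ /=.
    rewrite mxE [RHS]exchange_big /=; apply: eq_bigr => b _.
    rewrite !mxE big_distrl /=; apply: eq_bigr => a _.
    by [].
  apply: eq_bigr => g _; rewrite prod_all -big_split /=.
  by apply: eq_bigr => k _; rewrite mulrAC.
rewrite exchange_big /=.
transitivity (\sum_(g : {ffun 'I_m -> 'I_m})
   \det (\matrix_(i, j) M j (g i)) * \prod_(k < L) A (g (ev k)) (g (od k))).
  apply: eq_bigr => g _; rewrite big_distrl /=; apply: eq_bigr => s _.
  by rewrite mulrA; congr (_ * _ * _); apply: eq_bigr => i _; rewrite mxE.
rewrite (bigID (fun f : {ffun 'I_m -> 'I_m} => injectiveb f)) /= addrC big1 ?add0r => [|f Uf]; last first.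
  case/injectivePn: Uf => i1 [i2 Di12 Ef12].
  by rewrite (determinant_alternate Di12) ?mul0r // => j; rewrite !mxE Ef12.
rewrite (reindex (@pval _)) /=; last first.
  pose in_Sn := insubd (1%g : 'S_m).
  by exists in_Sn => /= f Uf; first apply: val_inj; apply: insubdK.
rewrite big_distrr /=.
apply: eq_big => /= [s | s _]; first by rewrite (valP s).
have -> : \matrix_(i, j) M j (pval s i) = \matrix_(i, j) M j (s i).
  by apply/matrixP => i j; rewrite !mxE pvalE.
rewrite det_colp -mulrA mulrCA; congr (_ * (_ * _)).
by apply: eq_bigr => k _; rewrite !pvalE.
Qed.
End Mult2.


Lemma tperm_inj (T U : finType) (f : T -> U) (fi : injective f) a b j :
  tperm (f a) (f b) (f j) = f (tperm a b j).
Proof.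
case: (tpermP a b j) => [->|->|]; first by rewrite tpermL.
  by rewrite tpermR.
move=> ja jb; apply: tpermD; apply/eqP => /fi; [exact/nesym| exact/nesym].
Qed.

Section Gen.
Variable L : nat.
Local Notation m := (2 * L)%N.

Definition pp (i : 'I_m) : 'I_m := if odd i then ev (hf i) else od (hf i).
Lemma pp_ev k : pp (ev k) = od k.
Proof. by rewrite /pp odd_ev hf_ev. Qed.
Lemma pp_od k : pp (od k) = ev k.
Proof. by rewrite /pp odd_od hf_od. Qed.
Lemma ord_cases (P : 'I_m -> Prop) :
  (forall k, P (ev k)) -> (forall k, P (od k)) -> forall i, P i.
Proof.
move=> he ho i; case: (boolP (odd i)) => oi; first by rewrite -(od_hf oi).
by rewrite -(ev_hf oi).
Qed.
Lemma ppK : involutive pp.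
Proof. move=> i; pattern i; apply: ord_cases => k; by rewrite ?(pp_ev, pp_od). Qed.
Lemma pp_inj : injective pp.
Proof. exact: inv_inj ppK. Qed.
Lemma odd_pp i : odd (pp i) = ~~ odd i.
Proof. by pattern i; apply: ord_cases => k; rewrite ?(pp_ev, pp_od) ?odd_ev ?odd_od. Qed.

Definition fl (c : 'I_L) : 'S_m := tperm (ev c) (od c).
Definition sw (c k : 'I_L) : 'S_m := (tperm (ev c) (ev k) * tperm (od c) (od k))%g.

Lemma ev_eq a b : (ev a == ev b :> 'I_m) = (a == b).
Proof. by apply/eqP/eqP => [/ev_inj|->]. Qed.
Lemma od_eq a b : (od a == od b :> 'I_m) = (a == b).
Proof. by apply/eqP/eqP => [/od_inj|->]. Qed.

Lemma fl_ev c j : fl c (ev j) = if j == c then od c else ev j.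
Proof.
rewrite /fl; case: tpermP => [/ev_inj ->|/eqP|]; first by rewrite eqxx.
  by rewrite (negPf (ev_neq_od _ _)).
move=> h1 h2; case: eqP => // jc; by case: h1; rewrite jc.
Qed.
Lemma fl_od c j : fl c (od j) = if j == c then ev c else od j.
Proof.
rewrite /fl; case: tpermP => [/eqP|/od_inj ->|]; last first.
  move=> h1 h2; case: eqP => // jc; by case: h2; rewrite jc.
  by rewrite eqxx.
  by rewrite eq_sym (negPf (ev_neq_od _ _)).
Qed.
Lemma sw_ev c k j : sw c k (ev j) = ev (tperm c k j).
Proof.
rewrite /sw permM (tperm_inj (@ev_inj L)); apply: tpermD; by rewrite eq_sym ev_neq_od. Qed.
Lemma sw_od c k j : sw c k (od j) = od (tperm c k j).
Proof.
by rewrite /sw permM (tpermD (x := ev c)) ?ev_neq_od // (tperm_inj (@od_inj L)).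
Qed.

Lemma odd_fl c : odd_perm (fl c) = true.
Proof. by rewrite /fl odd_tperm ev_neq_od. Qed.
Lemma odd_sw c k : c != k -> odd_perm (sw c k) = false.
Proof. by move=> ck; rewrite /sw odd_permM !odd_tperm ev_eq od_eq ck. Qed.

Lemma fl_pp c i : fl c (pp i) = pp (fl c i).
Proof.
pattern i; apply: ord_cases => j; rewrite ?(pp_ev, pp_od) fl_ev fl_od;
  by case: eqP; rewrite ?(pp_ev, pp_od).
Qed.
Lemma sw_pp c k i : sw c k (pp i) = pp (sw c k i).
Proof. by pattern i; apply: ord_cases => j; rewrite ?(pp_ev, pp_od) sw_ev sw_od ?(pp_ev, pp_od). Qed.

Variable R : comRingType.
Definition term (A : 'M[R]_m) (s : 'S_m) : R :=
  (-1) ^+ s * \prod_(k < L) A (s (ev k)) (s (od k)).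

Lemma Qf_term A : Qf A = \sum_s term A s.
Proof. by []. Qed.

Definition skewR (A : 'M[R]_m) := forall i j, A j i = - A i j.

Lemma term_fl A s c : skewR A -> term A (fl c * s)%g = term A s.
Proof.
move=> sk; rewrite /term odd_permM odd_fl signr_addb /=.
rewrite (bigD1 c) //= [in RHS](bigD1 c) //= !permM fl_ev fl_od eqxx sk.
rewrite expr1 mulN1r mulNr mulNr mulrN opprK; congr (_ * (_ * _)).
by apply: eq_bigr => k /negPf kc; rewrite !permM fl_ev fl_od kc.
Qed.

Lemma term_sw A s c k : c != k -> term A (sw c k * s)%g = term A s.
Proof.
move=> ck; rewrite /term odd_permM odd_sw //=; congr (_ * _).
have pM t x : (t * s)%g x = s (t x) := permM t s x.
under eq_bigr => j _ do rewrite !pM sw_ev sw_od.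
rewrite (reindex_perm (tperm c k)) /=; by under eq_bigr => j _ do rewrite tpermK.
Qed.

End Gen.

Section Ind.
Variable L : nat.
Local Notation m := (2 * L)%N.
Variable R : comRingType.
Variable A : 'M[R]_m.
Hypothesis sk : skewR A.

Definition Cm (s : 'S_m) := forall i, s (pp i) = pp (s i).
Definition Sset (s : 'S_m) := [set j : 'I_L | s (ev j) != ev j].

Lemma step_t (s : 'S_m) c : c \in Sset s -> Cm s ->
  let x := (s^-1)%g (ev c) in let k := hf x in
  exists t : 'S_m, [/\ t (ev c) = x, (forall i, t (pp i) = pp (t i)),
    (forall j, j != c -> j != k -> t (ev j) = ev j) &
    term A (t * s)%g = term A s].
Proof.
rewrite inE => cS Cs x k.
have xc : x != ev c.
  apply: contra cS => /eqP xe; apply/eqP; by rewrite -xe /x permKV.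
case: (boolP (odd x)) => ox; last first.
  have xe : x = ev k by rewrite /k ev_hf.
  have kc : c != k by apply: contra xc => /eqP ck; rewrite xe -ck.
  exists (sw c k); split.
  - by rewrite sw_ev tpermL.
  - by move=> i; rewrite sw_pp.
  - by move=> j jc jk; rewrite sw_ev tpermD // eq_sym.
  - exact: term_sw.
have xo : x = od k by rewrite /k od_hf.
case: (eqVneq k c) => [kc|kc].
  exists (fl c); split.
  - by rewrite fl_ev eqxx xo kc.
  - by move=> i; rewrite fl_pp.
  - by move=> j jc _; rewrite fl_ev (negPf jc).
  - exact: term_fl.
exists (sw c k * fl k)%g; split.
- by rewrite (permM (sw c k)) sw_ev tpermL fl_ev eqxx xo.
- by move=> i; rewrite !(permM (sw c k)) sw_pp fl_pp.
- by move=> j jc jk; rewrite (permM (sw c k)) sw_ev tpermD 1?eq_sym // fl_ev (negPf jk).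
- rewrite -mulgA term_sw 1?eq_sym //; exact: term_fl.
Qed.

Lemma term_comm_n n (s : 'S_m) : (#|Sset s| <= n)%N -> Cm s -> term A s = term A 1.
Proof.
elim: n s => [|n IH] s.
  rewrite leqn0 => /eqP /cards0_eq S0 Cs.
  have ev_fix j : s (ev j) = ev j.
    apply/eqP; apply/negPn/negP => hj; have : j \in Sset s by rewrite inE hj.
    by rewrite S0 inE.
  suff -> : s = 1%g by [].
  apply/permP => i; rewrite perm1; pattern i; apply: ord_cases => j.
    exact: ev_fix.
  by rewrite -pp_ev Cs ev_fix.
move=> sz Cs.
case: (set_0Vmem (Sset s)) => [S0|[c cS]].
  by apply: IH => //; rewrite S0 cards0.
have [t [t1 t2 t3 t4]] := step_t cS Cs.
set x := (s^-1)%g (ev c) in t1 t3.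
set k := hf x in t3.
rewrite -t4; apply: IH; last first.
  by move=> i; rewrite !permM t2 Cs.
have kS : k \in Sset s.
  rewrite inE; apply/negP => /eqP sk'.
  have sxx : s x = x.
    case: (boolP (odd x)) => ox.
      by rewrite -(od_hf ox) -/k -pp_ev Cs sk' pp_ev.
    by rewrite -(ev_hf ox) -/k sk'.
  move: cS; rewrite inE => /negP; apply; apply/eqP.
  have : x = ev c by rewrite -{1}sxx /x permKV.
  by move=> xe; rewrite -{1}xe sxx.
have sub : Sset (t * s)%g \proper Sset s.
  apply/properP; split.
    apply/subsetP => j; rewrite !inE permM.
    case: (eqVneq j c) => [->|jc]; first by rewrite t1 /x permKV eqxx.
    case: (eqVneq j k) => [->|jk]; first by move=> _; move: kS; rewrite inE.
    by rewrite t3.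
  exists c => //; by rewrite inE permM t1 /x permKV eqxx.
by rewrite -ltnS; apply: leq_trans sz; apply: proper_card.
Qed.

End Ind.


Section J.
Variable R : realFieldType.
Variable L : nat.
Local Notation m := (2 * L)%N.

Definition sgo (i : 'I_m) : R := if odd i then -1 else 1.
Definition Jm : 'M[R]_m := \matrix_(i, j) if j == pp i then sgo i else 0.

Lemma sgo_pp i : sgo (pp i) = - sgo i.
Proof. by rewrite /sgo odd_pp; case: (odd i); rewrite ?opprK. Qed.

Lemma pp_eqC (i j : 'I_m) : (j == pp i) = (i == pp j).
Proof. by apply/eqP/eqP => [->|->]; rewrite ppK. Qed.

Lemma Jm_skew : skewR Jm.
Proof.
move=> i j; rewrite !mxE pp_eqC; case: eqP => [->|_]; last by rewrite oppr0.
by rewrite sgo_pp.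
Qed.

Lemma Jm_sq : Jm *m Jm = - 1%:M.
Proof.
apply/matrixP => i j; rewrite !mxE (bigD1 (pp i)) //= big1 ?addr0; last first.
  by move=> l /negPf lp; rewrite !mxE lp mul0r.
rewrite !mxE eqxx ppK sgo_pp eq_sym.
case: eqP => _; last by rewrite mulr0 oppr0.
by rewrite /sgo; case: (odd i); rewrite ?mulrN ?mulNr ?opprK ?mulr1.
Qed.

Lemma Jm_unit : Jm \in unitmx.
Proof.
have h : Jm *m (- Jm) = 1%:M by rewrite mulmxN Jm_sq opprK.
by case: (mulmx1_unit h).
Qed.

Lemma term_Jm_cases s : term Jm s = 0 \/ term Jm s = 1.
Proof.
case: (boolP [forall k, s (od k) == pp (s (ev k))]) => [/forallP h|]; last first.
  rewrite negb_forall => /existsP [k hk]; left.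
  by rewrite /term (bigD1 k) //= mxE (negPf hk) mul0r mulr0.
right.
have Cs : Cm s.
  move=> i; pattern i; apply: ord_cases => k; first by rewrite pp_ev (eqP (h k)).
  by rewrite pp_od (eqP (h k)) ppK.
rewrite (term_comm_n Jm_skew (leqnn _) Cs) /term odd_perm1 expr0 mul1r.
by apply: big1 => k _; rewrite !perm1 mxE pp_ev eqxx /sgo odd_ev.
Qed.

Lemma Qf_Jm_pos : 0 < Qf Jm.
Proof.
rewrite Qf_term (bigD1 1%g) //=.
have -> : term Jm 1 = 1.
  rewrite /term odd_perm1 expr0 mul1r.
  by apply: big1 => k _; rewrite !perm1 mxE pp_ev eqxx /sgo odd_ev.
apply: (@lt_le_trans _ _ 1); first exact: ltr01.
rewrite lerDl; apply: sumr_ge0 => s _.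
by case: (term_Jm_cases s) => ->; rewrite ?ler01.
Qed.

End J.


Section Cong.
Variable R : realFieldType.

Definition sk n (A : 'M[R]_n) := A^T = - A.

Lemma sk_entry n (A : 'M[R]_n) i j : sk A -> A j i = - A i j.
Proof. by move=> h; have := congr1 (fun M : 'M_n => M i j) h; rewrite !mxE. Qed.

Lemma sk_diag n (A : 'M[R]_n) i : sk A -> A i i = 0.
Proof.
move=> h; have := sk_entry i i h => e.
have : 2 * A i i = 0 by rewrite mulr2n mulrDl mul1r {1}e addNr.
by move/eqP; rewrite mulf_eq0 pnatr_eq0 /= => /eqP.
Qed.

Lemma cg_sk n (N A : 'M[R]_n) : sk A -> sk (N *m A *m N^T).
Proof. by move=> h; rewrite /sk !trmx_mul trmxK h mulNmx mulmxN mulmxA. Qed.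

Lemma cg_unit n (N A : 'M[R]_n) : N \in unitmx -> A \in unitmx -> N *m A *m N^T \in unitmx.
Proof. by move=> hN hA; rewrite !unitmx_mul hN hA unitmx_tr hN. Qed.

Lemma cg_comp n (N1 N2 A : 'M[R]_n) :
  N2 *m (N1 *m A *m N1^T) *m N2^T = (N2 *m N1) *m A *m (N2 *m N1)^T.
Proof. by rewrite trmx_mul !mulmxA. Qed.

Lemma row_nz n (A : 'M[R]_n) i : A \in unitmx -> exists j, A i j != 0.
Proof.
move=> hA; case: (boolP [exists j, A i j != 0]) => [/existsP //|/existsPn h].
move: hA; rewrite unitmxE (expand_det_row _ i) big1 ?unitr0 // => j _.
by move: (h j); rewrite negbK => /eqP ->; rewrite mul0r.
Qed.


Lemma perm_cg n (s : 'S_n) (A : 'M[R]_n) x y :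
  (perm_mx s *m A *m (perm_mx s)^T) x y = A (s x) (s y).
Proof. by rewrite -row_permE tr_perm_mx -col_permE !mxE. Qed.

Lemma diag_cg n (d : 'rV[R]_n) (A : 'M[R]_n) x y :
  (diag_mx d *m A *m (diag_mx d)^T) x y = d 0 x * A x y * d 0 y.
Proof. by rewrite tr_diag_mx mul_diag_mx mul_mx_diag !mxE. Qed.

Lemma perm_unit n (s : 'S_n) : (perm_mx s : 'M[R]_n) \in unitmx.
Proof. by rewrite unitmxE det_perm unitfE signr_eq0. Qed.

Lemma diag_unit n (d : 'rV[R]_n) : (forall i, d 0 i != 0) -> diag_mx d \in unitmx.
Proof. by move=> h; rewrite unitmxE det_diag unitfE; apply/prodf_neq0 => i _. Qed.

Lemma normalize n (A : 'M[R]_n.+2) : sk A -> A \in unitmx ->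
  exists N, N \in unitmx /\ (N *m A *m N^T) 0 1 = 1.
Proof.
move=> hs hu; have [j hj] := row_nz 0 hu.
have j0 : j != 0 by apply: contraNneq hj => ->; rewrite sk_diag.
pose s := tperm (1 : 'I_n.+2) j.
pose B := perm_mx s *m A *m (perm_mx s)^T.
have B01 : B 0 1 = A 0 j.
  by rewrite /B perm_cg /s tpermL tpermD // eq_sym.
pose d := \row_i (if i == 0 then (B 0 1)^-1 else 1) : 'rV[R]_n.+2.
exists (diag_mx d *m perm_mx s); split.
  rewrite unitmx_mul perm_unit andbT; apply: diag_unit => i; rewrite mxE.
  by case: (i == 0); rewrite ?invr_eq0 ?B01 ?oner_eq0.
by rewrite -cg_comp diag_cg -/B [d 0 0]mxE [d 0 1]mxE /= mulr1 mulVf ?B01.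
Qed.

Definition J2 : 'M[R]_2 :=
  \matrix_(i, j) (if (i == 0) && (j == 1) then 1 else if (i == 1) && (j == 0) then -1 else 0).

Lemma ord2_cases (i : 'I_2) : i = 0 \/ i = 1.
Proof. case: i => [[|[|i]] hi]; [left|right|by []]; exact: val_inj. Qed.

Lemma J2_sq : J2 *m J2 = - 1%:M.
Proof.
apply/matrixP => i j; rewrite !mxE !big_ord_recl big_ord0 !mxE /=.
by case: (ord2_cases i) => ->; case: (ord2_cases j) => ->; rewrite /= ?mulr0 ?mul0r ?mulr1 ?mul1r ?addr0 ?add0r ?mulrN ?mulNr ?opprK ?oppr0.
Qed.

Lemma J2_tr : J2^T = - J2.
Proof.
apply/matrixP => i j; rewrite !mxE.
by case: (ord2_cases i) => ->; case: (ord2_cases j) => ->; rewrite /= ?oppr0 ?opprK.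
Qed.

Lemma ul_J2 n (C : 'M[R]_(2 + n)) : sk C -> C 0 1 = 1 -> ulsubmx C = J2.
Proof.
move=> hs h01; apply/matrixP => i j; rewrite !mxE.
have e0 : lshift n (0 : 'I_2) = 0 by apply: val_inj.
have e1 : lshift n (1 : 'I_2) = 1 by apply: val_inj.
case: (ord2_cases i) => ->; case: (ord2_cases j) => ->; rewrite ?e0 ?e1 /=.
- by rewrite sk_diag.
- by rewrite h01.
- by rewrite (sk_entry _ _ hs) h01.
- by rewrite sk_diag.
Qed.

Lemma reduce n (A : 'M[R]_(2 + n)) : sk A -> A \in unitmx ->
  exists P, P \in unitmx /\ exists D : 'M[R]_n,
    [/\ sk D, D \in unitmx & P *m A *m P^T = block_mx J2 0 0 D].
Proof.
move=> hs hu.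
have [N [Nu N01]] := normalize hs hu.
pose C : 'M[R]_(2 + n) := N *m A *m N^T.
have C01 : C 0 1 = 1 := N01.
have Cs : sk C := cg_sk N hs.
have Cu : C \in unitmx := cg_unit Nu hu.
have CJ := ul_J2 Cs C01.
pose X := dlsubmx C *m J2.
pose P : 'M[R]_(2 + n) := block_mx 1%:M 0 X 1%:M.
have Pu : P \in unitmx by rewrite unitmxE det_lblock !det1 mulr1 unitr1.
set Z := P *m C *m P^T.
have Zs : sk Z := cg_sk P Cs.
have Zu : Z \in unitmx := cg_unit Pu Cu.
have ZE : Z = block_mx J2 (ursubmx Z) 0 (drsubmx Z).
  rewrite -{1}[Z]submxK; congr block_mx.
    rewrite /Z /P -[C]submxK tr_block_mx !mulmx_block.
    by rewrite block_mxKul trmx1 trmx0 !mul1mx !mul0mx mulmx1 mulmx0 !addr0 CJ.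
  rewrite /Z /P -[C]submxK tr_block_mx !mulmx_block block_mxKdl.
  rewrite trmx1 trmx0 mulmx1 mulmx0 addr0 mul1mx CJ /X -mulmxA J2_sq.
  by rewrite mulmxN mulmx1 addNr.
set U := ursubmx Z in ZE; set D := drsubmx Z in ZE.
have := Zs; rewrite /sk ZE tr_block_mx opp_block_mx trmx0 => /eq_block_mx [_ h0 _ hD].
have U0 : U = 0 by apply/eqP; rewrite -oppr_eq0 -h0.
have Du : D \in unitmx.
  move: Zu; rewrite ZE !unitmxE det_ublock !unitfE mulf_eq0 negb_or.
  by case/andP.
exists (P *m N); split; first by rewrite unitmx_mul Pu Nu.
exists D; split => //.
by rewrite -cg_comp -/C -/Z ZE U0.
Qed.

Lemma congr_ex_lt K n : (n < K)%N -> forall A B : 'M[R]_n,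
  sk A -> sk B -> A \in unitmx -> B \in unitmx ->
  exists M, M \in unitmx /\ B = M *m A *m M^T.
Proof.
elim: K n => [|K IH] n //.
case: n => [|[|n]] ltn A B hA hB uA uB.
- exists 1%:M; split; first exact: unitmx1.
  by rewrite (flatmx0 A) (flatmx0 B) mulmx0 mul0mx.
- by move: uA; rewrite unitmxE det_mx11 sk_diag // unitfE eqxx.
have [P [Pu [D [Ds Du PE]]]] := reduce (A := A) hA uA.
have [P' [Pu' [D' [Ds' Du' PE']]]] := reduce (A := B) hB uB.
have [N [Nu DE]] := IH n (ltnW ltn) D D' Ds Ds' Du Du'.
pose bN : 'M[R]_(2 + n) := block_mx 1%:M 0 0 N.
have bNu : bN \in unitmx by rewrite unitmxE det_ublock det1 mul1r -unitmxE.
exists (invmx P' *m bN *m P); split.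
  by rewrite !unitmx_mul unitmx_inv Pu' bNu Pu.
have e : bN *m (P *m A *m P^T) *m bN^T = P' *m B *m P'^T.
  rewrite PE PE' /bN tr_block_mx trmx1 !trmx0 !mulmx_block.
  by rewrite !mul1mx !mul0mx !mulmx1 !mulmx0 !addr0 !add0r DE mul0mx.
have B1 : B = invmx P' *m (P' *m B *m P'^T) *m (invmx P')^T.
  rewrite trmx_inv !mulmxA mulVmx // mul1mx -mulmxA mulmxV ?unitmx_tr //.
  by rewrite mulmx1.
rewrite {1}B1 -e.
by rewrite !trmx_mul !mulmxA.
Qed.
End Cong.


Lemma pf_Qf (R : realType) (L : nat) (A : 'M[R]_(2 * L)) :
  pfaffian A = Qf A / ((2 ^ ((2 * L)./2))%N%:R * (((2 * L)./2)`!)%:R).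
Proof.
rewrite /pfaffian /Qf; congr (_ / _); apply: eq_bigr => s _; congr (_ * _).
rewrite (prod_even (fun i => A (s i) (s (ord_succ i)))).
by apply: eq_bigr => k _; rewrite ord_succ_ev.
Qed.

Lemma cst_neq0 (R : realType) (L : nat) :
  ((2 ^ ((2 * L)./2))%N%:R * (((2 * L)./2)`!)%:R : R) != 0.
Proof. by rewrite mulf_neq0 // pnatr_eq0 -lt0n ?expn_gt0 ?fact_gt0. Qed.

Theorem proposition3p3 (R : realType) (L : nat) (hL : (0 < L)%N)
  (A0 A1 : 'M[R]_(2 * L)) :
  skew_sym A0 -> skew_sym A1 -> strictly_positive A0 -> strictly_positive A1 ->
  (kitaev_index A0 = kitaev_index A1 <-> Sf2 A0 A1 = 1).
Proof.
rewrite /skew_sym /strictly_positive /kitaev_index /Sf2 => s0 s1 u0 u1.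
have := epsilon_spec (inhabits (0 : 'M[R]_(2 * L)))
  (fun M => M \in unitmx /\ A1 = M *m A0 *m M^T)
  (congr_ex_lt (ltnSn _) (s0 : sk A0) (s1 : sk A1) u0 u1).
set M := epsilon _ _ => -[Mu ME].
have Jsk : sk (Jm R L).
  apply/matrixP => i j; rewrite !mxE.
  have := @Jm_skew R L i j; rewrite !mxE => ->; by [].
have [N [Nu NE]] := congr_ex_lt (ltnSn _) Jsk (s0 : sk A0) (Jm_unit R L) u0.

have cn := cst_neq0 R L.
have Q0 : Qf A0 != 0.
  rewrite NE Qf_congr mulf_neq0 //; first by rewrite -unitfE -unitmxE.
  by rewrite gt_eqF // Qf_Jm_pos.
have P1E : pfaffian A1 = \det M * pfaffian A0.
  by rewrite !pf_Qf ME Qf_congr mulrA.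
have P0n : pfaffian A0 != 0 by rewrite pf_Qf mulf_neq0 // invr_eq0.
rewrite P1E [Num.sg (_ * pfaffian A0)]sgrM.
set k := Num.sg (pfaffian A0).
have kn : k != 0 by rewrite sgr_eq0.
split; last by move=> h; rewrite h mul1r.
move=> /eqP; rewrite -subr_eq0 -{1}[k]mul1r -mulrBl mulf_eq0 (negPf kn) orbF.
by rewrite subr_eq0 => /eqP <-.
Qed.
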